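(* Let $(X,d)$ be a u.l.f. metric space and $h\colon X\to\mathbb{R}$ a coarse map. Then the action $\sigma_h$ of $\mathbb{R}$ on $\mathrm{C}^*_u(X)$ given by $\sigma_{h,t}(a)=e^{it\bar h}ae^{-it\bar h}$ is strongly continuous, i.e., $t\mapsto\sigma_{h,t}(a)\in\mathrm{C}^*_u(X)$ is norm continuous for all $a\in\mathrm{C}^*_u(X)$.
   Context: A metric space is u.l.f. if for every $r>0$ the cardinalities of its balls of radius $r$ are uniformly bounded. $\mathrm{C}^*_u(X)$ is the norm closure of the $^*$-algebra of operators $a$ on $\ell_2(X)$ with $\sup\{d(x,y):\langle a\delta_y,\delta_x\rangle\neq0\}<\infty$. $h$ is coarse if for each $r>0$ there is $s>0$ with $d(x,y)<r\Rightarrow|h(x)-h(y)|<s$. $e^{it\bar h}$ is the diagonal unitary $\delta_x\mapsto e^{ith(x)}\delta_x$. *)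

(* Defs.v *)
From Stdlib Require Import Reals List ClassicalEpsilon.
From Coquelicot Require Import Coquelicot.
Open Scope R_scope.

Section Defs.
Variable X : Type.

Definition is_metric (d : X -> X -> R) : Prop :=
  (forall x y, 0 <= d x y) /\ (forall x y, d x y = 0 <-> x = y) /\
  (forall x y, d x y = d y x) /\ (forall x y z, d x z <= d x y + d y z).

Definition ulf (d : X -> X -> R) : Prop :=
  forall r, 0 < r -> exists N : nat, forall x, exists l : list X,
    (length l <= N)%nat /\ forall y, d x y < r -> In y l.

Definition coarse (d : X -> X -> R) (h : X -> R) : Prop :=
  forall r, 0 < r -> exists s, 0 < s /\
    forall x y, d x y < r -> Rabs (h x - h y) < s.

Definition sumsq (f : X -> C) (l : list X) : R :=
  fold_right (fun x acc => Cmod (f x) ^ 2 + acc) 0 l.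

(* ||f||_2 <= c  (sum over X = sup of finite partial sums) *)
Definition l2norm_le (f : X -> C) (c : R) : Prop :=
  0 <= c /\ forall l, NoDup l -> sumsq f l <= c ^ 2.

Definition l2 (f : X -> C) : Prop := exists c, l2norm_le f c.

Definition op := (X -> C) -> (X -> C).

Definition opnorm_le (T : op) (c : R) : Prop :=
  0 <= c /\ forall f m, l2 f -> l2norm_le f m -> l2norm_le (T f) (c * m).

(* bounded linear operator on l2(X) (only its behaviour on l2 matters) *)
Definition bdd_op (T : op) : Prop :=
  (forall f g, l2 f -> l2 g -> forall x, T (fun y => Cplus (f y) (g y)) x = Cplus (T f x) (T g x)) /\
  (forall (k : C) f, l2 f -> forall x, T (fun y => Cmult k (f y)) x = Cmult k (T f x)) /\
  (exists c, opnorm_le T c).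

Definition opsub (S T : op) : op := fun f x => Cminus (S f x) (T f x).

Definition delta (y : X) : X -> C :=
  fun x => if excluded_middle_informative (x = y) then RtoC 1 else RtoC 0.

Definition finite_prop (d : X -> X -> R) (T : op) : Prop :=
  exists Rp, forall x y, T (delta y) x <> RtoC 0 -> d x y <= Rp.

Definition in_Cu (d : X -> X -> R) (a : op) : Prop :=
  bdd_op a /\ forall eps, 0 < eps ->
    exists b, bdd_op b /\ finite_prop d b /\ opnorm_le (opsub a b) eps.

Definition expi (th : R) : C := (cos th, sin th).

Definition expdiag (h : X -> R) (t : R) : op :=
  fun f x => Cmult (expi (t * h x)) (f x).

Definition sigma_act (h : X -> R) (t : R) (a : op) : op :=
  fun f => expdiag h t (a (expdiag h (- t) f)).
End Defs.

(* Main.v *)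
Require Import Defs.
From Stdlib Require Import Reals Lra Lia Psatz ZArith List Classical ClassicalEpsilon FunctionalExtensionality.
From Coquelicot Require Import Coquelicot.
Open Scope R_scope.

Definition rsq {X : Type} (u : X -> R) (l : list X) : R :=
  fold_right (fun x acc => u x ^ 2 + acc) 0 l.
Definition rl2 {X : Type} (u : X -> R) (c : R) : Prop :=
  0 <= c /\ forall l, NoDup l -> rsq u l <= c ^ 2.

Lemma l2_rl2 {X : Type} (f : X -> C) c :
  l2norm_le X f c = rl2 (fun x => Cmod (f x)) c.
Proof. reflexivity. Qed.

Lemma rsq_ge0 {X : Type} (u : X -> R) l : 0 <= rsq u l.
Proof. induction l; simpl; nra. Qed.

Lemma rsq_dom {X : Type} (u v : X -> R) k l :
  0 <= k -> (forall x, 0 <= u x) -> (forall x, 0 <= v x <= k * u x) ->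
  rsq v l <= k ^ 2 * rsq u l.
Proof.
  intros Hk Hu Hv; induction l as [|a l IH]; simpl; [lra|].
  specialize (Hv a); specialize (Hu a).
  assert (v a ^ 2 <= k ^ 2 * u a ^ 2) by nra. nra.
Qed.

Lemma rsq_add {X : Type} (u v w : X -> R) lam l :
  0 < lam -> (forall x, 0 <= u x) -> (forall x, 0 <= v x) ->
  (forall x, 0 <= w x <= u x + v x) ->
  rsq w l <= (1 + lam) * rsq u l + (1 + / lam) * rsq v l.
Proof.
  intros Hl Hu Hv Hw; induction l as [|a l IH]; simpl; [lra|].
  specialize (Hw a); specialize (Hu a); specialize (Hv a).
  assert (Hm : lam * / lam = 1) by (field; lra).
  assert (Hp : 0 < / lam) by (apply Rinv_0_lt_compat; lra).
  assert (2 * u a * v a <= lam * u a ^ 2 + / lam * v a ^ 2).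
  { assert (0 <= / lam * (lam * u a - v a) ^ 2) by (apply Rmult_le_pos; [lra | apply pow2_ge_0]).
    assert (/ lam * (lam * u a - v a) ^ 2 = lam * u a ^ 2 - 2 * u a * v a + / lam * v a ^ 2) by (field; lra).
    lra. }
  assert (w a ^ 2 <= (u a + v a) ^ 2) by nra.
  nra.
Qed.

Lemma rl2_zero_pt {X : Type} (u : X -> R) x : rl2 u 0 -> (forall y, 0 <= u y) -> u x = 0.
Proof.
  intros [_ H] Hu. specialize (H (x :: nil)). simpl in H.
  assert (u x ^ 2 + 0 <= 0 ^ 2) by (apply H; constructor; [simpl; tauto| constructor]).
  specialize (Hu x). nra.
Qed.

Lemma rl2_dom {X : Type} (u v : X -> R) k c :
  rl2 u c -> 0 <= k -> (forall x, 0 <= u x) -> (forall x, 0 <= v x <= k * u x) ->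
  rl2 v (k * c).
Proof.
  intros [Hc H] Hk Hu Hv. split; [nra|]. intros l Hl.
  pose proof (rsq_dom u v k l Hk Hu Hv). specialize (H l Hl).
  assert (k^2 * rsq u l <= k^2 * c^2) by (apply Rmult_le_compat_l; nra). nra.
Qed.

Lemma rl2_mono {X : Type} (u : X -> R) c c' : rl2 u c -> c <= c' -> rl2 u c'.
Proof.
  intros [Hc H] Hle; split; [lra|]. intros l Hl. specialize (H l Hl). nra.
Qed.

Lemma rl2_add {X : Type} (u v w : X -> R) a b :
  rl2 u a -> rl2 v b -> (forall x, 0 <= u x) -> (forall x, 0 <= v x) ->
  (forall x, 0 <= w x <= u x + v x) -> rl2 w (a + b).
Proof.
  intros Ha Hb Hu Hv Hw.
  destruct (Req_dec a 0) as [Ea|Na].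
  { subst a. replace (0 + b) with (1 * b) by ring.
    apply (rl2_dom v w 1 b Hb); [lra|auto|].
    intros x. pose proof (rl2_zero_pt u x Ha Hu). specialize (Hw x). lra. }
  destruct (Req_dec b 0) as [Eb|Nb].
  { subst b. replace (a + 0) with (1 * a) by ring.
    apply (rl2_dom u w 1 a Ha); [lra|auto|].
    intros x. pose proof (rl2_zero_pt v x Hb Hv). specialize (Hw x). lra. }
  destruct Ha as [Ha0 Ha]; destruct Hb as [Hb0 Hb].
  split; [lra|]. intros l Hl.
  assert (Hpa : 0 < a) by lra. assert (Hpb : 0 < b) by lra.
  pose proof (rsq_add u v w (b / a) l ltac:(apply Rdiv_lt_0_compat; lra) Hu Hv Hw) as H.
  specialize (Ha l Hl); specialize (Hb l Hl).
  assert (E1 : 1 + b / a = (a + b) / a) by (field; lra).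
  assert (E2 : 1 + / (b / a) = (a + b) / b) by (field; lra).
  rewrite E1, E2 in H.
  assert (0 < (a + b) / a) by (apply Rdiv_lt_0_compat; lra).
  assert (0 < (a + b) / b) by (apply Rdiv_lt_0_compat; lra).
  assert ((a+b)/a * rsq u l <= (a+b)/a * a^2) by (apply Rmult_le_compat_l; lra).
  assert ((a+b)/b * rsq v l <= (a+b)/b * b^2) by (apply Rmult_le_compat_l; lra).
  assert (E3 : (a+b)/a * a^2 + (a+b)/b * b^2 = (a+b)^2) by (field; lra).
  lra.
Qed.

Lemma rl2_pt {X : Type} (u : X -> R) c x : rl2 u c -> 0 <= u x -> u x <= c.
Proof.
  intros [Hc H] Hx. specialize (H (x :: nil)). simpl in H.
  assert (u x ^ 2 + 0 <= c ^ 2) by (apply H; constructor; [simpl; tauto| constructor]).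
  nra.
Qed.

Definition lsum {A X : Type} (F : A -> X -> R) (L : list A) (x : X) : R :=
  fold_right (fun i acc => F i x + acc) 0 L.

Lemma lsum_ge0 {A X : Type} (F : A -> X -> R) L x :
  (forall i y, 0 <= F i y) -> 0 <= lsum F L x.
Proof. intros H; induction L; simpl; [lra|]. specialize (H a x). lra. Qed.

Lemma rl2_lsum {A X : Type} (F : A -> X -> R) L c :
  (forall i y, 0 <= F i y) -> 0 <= c -> (forall i, In i L -> rl2 (F i) c) ->
  rl2 (lsum F L) (INR (length L) * c).
Proof.
  intros HF Hc; induction L as [|i L IH]; intros HL.
  - simpl. split; [lra|]. intros l _. unfold lsum; simpl.
    induction l; simpl; [lra|]. nra.
  - replace (INR (length (i :: L)) * c) with (c + INR (length L) * c)
      by (simpl length; rewrite S_INR; ring).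
    apply (rl2_add (F i) (lsum F L)).
    + apply HL; simpl; auto.
    + apply IH. intros; apply HL; simpl; auto.
    + auto.
    + intros; apply lsum_ge0; auto.
    + intros x; simpl. split; [|lra]. pose proof (lsum_ge0 F L x HF). specialize (HF i x). unfold lsum in *. lra.
Qed.

Lemma sin_abs_le y : Rabs (sin y) <= Rabs y.
Proof.
  assert (H : forall y, 0 <= y -> Rabs (sin y) <= y).
  { intros z Hz. destruct (Req_dec z 0) as [->|Nz]; [rewrite sin_0, Rabs_R0; lra|].
    pose proof (sin_lt_x z ltac:(lra)).
    destruct (Rle_lt_dec z 1).
    - assert (0 <= sin z) by (apply sin_ge_0; pose proof PI2_1; lra).
      rewrite Rabs_pos_eq; lra.
    - pose proof (SIN_bound z). apply Rabs_le; lra. }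
  destruct (Rle_lt_dec 0 y).
  - rewrite (Rabs_pos_eq y) by lra. auto.
  - rewrite <- (Ropp_involutive y), sin_neg, Rabs_Ropp, Rabs_Ropp. rewrite (Rabs_pos_eq (- y)) by lra. apply H. lra.
Qed.

Lemma Cmod_expi t : Cmod (expi t) = 1.
Proof.
  unfold Cmod, expi; simpl. pose proof (sin2_cos2 t). unfold Rsqr in H.
  replace (cos t * (cos t * 1) + sin t * (sin t * 1)) with 1 by lra. apply sqrt_1.
Qed.

Lemma Cmod_em t z : Cmod (Cmult (expi t) z) = Cmod z.
Proof. rewrite Cmod_mult, Cmod_expi; ring. Qed.

Lemma expi_add a b : expi (a + b) = Cmult (expi a) (expi b).
Proof.
  unfold expi, Cmult; simpl. rewrite cos_plus, sin_plus. f_equal; ring.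
Qed.

Lemma expi_0 : expi 0 = RtoC 1.
Proof. unfold expi, RtoC. rewrite cos_0, sin_0. reflexivity. Qed.

Lemma Cmod_expi_sub a b : Cmod (Cminus (expi a) (expi b)) <= Rabs (a - b).
Proof.
  unfold Cmod, expi, Cminus, Cplus, Copp; simpl.
  set (y := (a - b) / 2).
  assert (E : cos (a - b) = 1 - 2 * sin y * sin y).
  { rewrite <- cos_2a_sin. f_equal. unfold y; field. }
  rewrite cos_minus in E.
  pose proof (sin2_cos2 a); pose proof (sin2_cos2 b). unfold Rsqr in *.
  pose proof (sin_abs_le y) as Hy.
  assert (Hsq : (cos a + - cos b) * ((cos a + - cos b) * 1) + (sin a + - sin b) * ((sin a + - sin b) * 1)
     = 4 * (sin y * sin y)) by nra.
  rewrite Hsq. rewrite <- (sqrt_Rsqr (Rabs (a - b))) by apply Rabs_pos.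
  apply sqrt_le_1_alt. unfold Rsqr.
  assert (Rabs (a - b) = 2 * Rabs y).
  { unfold y. rewrite Rabs_div by lra. rewrite (Rabs_pos_eq 2) by lra. field. }
  rewrite H1.
  pose proof (Rabs_pos (sin y)).
  assert (sin y * sin y = Rabs (sin y) * Rabs (sin y)) by (rewrite <- Rabs_mult; rewrite Rabs_pos_eq; nra).
  nra.
Qed.

Lemma l2n_nonneg {X} (f : X -> C) c : l2norm_le X f c -> 0 <= c.
Proof. intros [H _]; exact H. Qed.

Lemma l2n_l2 {X} (f : X -> C) c : l2norm_le X f c -> l2 X f.
Proof. intros H; exists c; exact H. Qed.

Lemma l2n_dom {X} (f g : X -> C) c k :
  l2norm_le X f c -> 0 <= k -> (forall x, Cmod (g x) <= k * Cmod (f x)) ->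
  l2norm_le X g (k * c).
Proof.
  intros Hf Hk H. rewrite l2_rl2 in *. apply (rl2_dom _ _ k c Hf Hk).
  - intros; apply Cmod_ge_0.
  - intros x; split; [apply Cmod_ge_0| auto].
Qed.

Lemma l2n_dom1 {X} (f g : X -> C) c :
  l2norm_le X f c -> (forall x, Cmod (g x) <= Cmod (f x)) -> l2norm_le X g c.
Proof.
  intros Hf H. replace c with (1 * c) by ring. apply (l2n_dom f); [auto|lra|].
  intros x; rewrite Rmult_1_l; auto.
Qed.

Lemma l2n_em {X} (f : X -> C) c th :
  l2norm_le X f c -> l2norm_le X (fun x => Cmult (expi (th x)) (f x)) c.
Proof. intros H; apply (l2n_dom1 f); auto. intros x; rewrite Cmod_em; lra. Qed.

Lemma l2n_pt {X} (f : X -> C) c x : l2norm_le X f c -> Cmod (f x) <= c.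
Proof. intros H; rewrite l2_rl2 in H. apply (rl2_pt _ c x H), Cmod_ge_0. Qed.

Lemma l2n_mono {X} (f : X -> C) c c' : l2norm_le X f c -> c <= c' -> l2norm_le X f c'.
Proof. intros H Hc; rewrite l2_rl2 in *; eapply rl2_mono; eauto. Qed.

Lemma l2n_add {X} (f g F : X -> C) a b :
  l2norm_le X f a -> l2norm_le X g b ->
  (forall x, Cmod (F x) <= Cmod (f x) + Cmod (g x)) -> l2norm_le X F (a + b).
Proof.
  intros Hf Hg H. rewrite l2_rl2 in *.
  apply (rl2_add _ _ _ a b Hf Hg); try (intros; apply Cmod_ge_0).
  intros x; split; [apply Cmod_ge_0|auto].
Qed.

Lemma op_pt {X} (T : op X) c f m x :
  opnorm_le X T c -> l2norm_le X f m -> Cmod (T f x) <= c * m.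
Proof.
  intros [Hc H] Hf. apply l2n_pt. apply H; auto. exact (l2n_l2 f m Hf).
Qed.

Lemma op_l2n {X} (T : op X) c f m :
  opnorm_le X T c -> l2norm_le X f m -> l2norm_le X (T f) (c * m).
Proof. intros [Hc H] Hf. apply H; auto. exact (l2n_l2 f m Hf). Qed.

Lemma rsq_zero {X} (u : X -> R) l : (forall z, In z l -> u z = 0) -> rsq u l = 0.
Proof.
  induction l as [|a l IH]; simpl; intros H; [lra|].
  rewrite H by auto. rewrite IH by auto. ring.
Qed.

Lemma rsq_single {X} (u : X -> R) y l :
  (forall z, z <> y -> u z = 0) -> NoDup l -> rsq u l <= u y ^ 2.
Proof.
  intros Hu Hl; induction Hl as [|a l Ha Hl IH]; simpl.
  - apply pow2_ge_0.
  - destruct (classic (a = y)) as [->|Ne].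
    + rewrite rsq_zero; [lra|]. intros z Hz. apply Hu. intros ->. tauto.
    + rewrite (Hu a Ne). lra.
Qed.

Lemma delta_l2n {X} (y : X) : l2norm_le X (delta X y) 1.
Proof.
  rewrite l2_rl2. split; [lra|]. intros l Hl.
  eapply Rle_trans; [apply (rsq_single _ y l); auto|].
  - intros z Hz. unfold delta. destruct (excluded_middle_informative (z = y)); [tauto|].
    rewrite Cmod_0; auto.
  - unfold delta. destruct (excluded_middle_informative (y = y)); [|tauto].
    rewrite Cmod_1. lra.
Qed.

Lemma rsq_app {X} (u : X -> R) l l' : rsq u (l ++ l') = rsq u l + rsq u l'.
Proof. induction l; simpl; [ring|]. rewrite IHl; ring. Qed.

Definition notin_b {X} (l : list X) (y : X) : bool :=
  if excluded_middle_informative (In y l) then false else true.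

Definition tailf {X} (l : list X) (G : X -> C) : X -> C :=
  fun y => if excluded_middle_informative (In y l) then RtoC 0 else G y.
Definition truncf {X} (l : list X) (G : X -> C) : X -> C :=
  fun y => if excluded_middle_informative (In y l) then G y else RtoC 0.

Lemma rsq_tail {X} (G : X -> C) l l' :
  rsq (fun y => Cmod (tailf l G y)) l' = rsq (fun y => Cmod (G y)) (filter (notin_b l) l').
Proof.
  induction l' as [|a l' IH]; simpl; [reflexivity|].
  rewrite IH. unfold tailf.
  destruct (excluded_middle_informative (In a l)) as [Hi|Hi] eqn:E.
  - replace (notin_b l a) with false by (unfold notin_b; rewrite E; reflexivity).
    rewrite Cmod_0. ring.
  - replace (notin_b l a) with true by (unfold notin_b; rewrite E; reflexivity).
    reflexivity.
Qed.

Lemma tail_small {X} (G : X -> C) c eps :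
  l2norm_le X G c -> 0 < eps -> exists l, NoDup l /\ l2norm_le X (tailf l G) eps.
Proof.
  intros HG He. rewrite l2_rl2 in HG. destruct HG as [Hc HG].
  set (u := fun y => Cmod (G y)).
  set (E := fun v => exists l, NoDup l /\ v = rsq u l).
  assert (Hb : bound E). { exists (c ^ 2). intros v [l [Hl ->]]. apply HG; auto. }
  assert (Hne : exists v, E v). { exists 0. exists nil. split; [constructor|reflexivity]. }
  destruct (completeness E Hb Hne) as [S [HS1 HS2]].
  destruct (classic (exists l, NoDup l /\ rsq u l > S - eps ^ 2)) as [[l [Hl Hgt]]|Hn].
  - exists l; split; auto. rewrite l2_rl2. split; [lra|]. intros l' Hl'.
    rewrite rsq_tail.
    set (l'' := filter (notin_b l) l').
    assert (Hnd : NoDup (l ++ l'')).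
    { apply NoDup_app; auto. apply NoDup_filter; auto.
      intros a Ha Ha'. unfold l'' in Ha'. apply filter_In in Ha'. destruct Ha' as [_ Hb'].
      unfold notin_b in Hb'. destruct (excluded_middle_informative (In a l)); [discriminate|tauto]. }
    assert (rsq u (l ++ l'') <= S) by (apply HS1; exists (l ++ l''); auto).
    rewrite rsq_app in H. fold u. lra.
  - exfalso. assert (S <= S - eps ^ 2).
    { apply HS2. intros v [l [Hl ->]]. destruct (Rle_lt_dec (rsq u l) (S - eps ^ 2)); auto.
      exfalso; apply Hn; exists l; split; auto; lra. }
    assert (0 < eps ^ 2) by (apply pow_lt; lra). lra.
Qed.

Lemma bdd_add {X} (b : op X) f g x : bdd_op X b -> l2 X f -> l2 X g ->
  b (fun y => Cplus (f y) (g y)) x = Cplus (b f x) (b g x).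
Proof. intros [H _] Hf Hg. apply H; auto. Qed.

Lemma bdd_scal {X} (b : op X) k f x : bdd_op X b -> l2 X f ->
  b (fun y => Cmult k (f y)) x = Cmult k (b f x).
Proof. intros [_ [H _]] Hf. apply H; auto. Qed.

Lemma trunc_zero {X} (d : X -> X -> R) (b : op X) Rp x G l :
  bdd_op X b -> (forall x y, b (delta X y) x <> RtoC 0 -> d x y <= Rp) ->
  l2 X G -> (forall y, d x y <= Rp -> G y = RtoC 0) -> NoDup l ->
  b (truncf l G) x = RtoC 0.
Proof.
  intros Hb Hfp [c HG] HGz Hl. induction Hl as [|a l Ha Hl IH].
  - replace (truncf nil G) with (fun y => Cmult (RtoC 0) (delta X x y)).
    + rewrite bdd_scal; auto. ring. exact (l2n_l2 _ _ (delta_l2n x)).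
    + apply functional_extensionality; intros y. unfold truncf.
      destruct (excluded_middle_informative (In y nil)); [simpl in *; tauto|]. ring.
  - replace (truncf (a :: l) G) with (fun y => Cplus (Cmult (G a) (delta X a y)) (truncf l G y)).
    + rewrite bdd_add; auto.
      * rewrite bdd_scal; auto. rewrite IH.
        -- destruct (classic (d x a <= Rp)) as [Hd|Hd].
           ++ rewrite HGz by auto. ring.
           ++ destruct (classic (b (delta X a) x = RtoC 0)) as [E|E].
              ** rewrite E; ring.
              ** exfalso; apply Hd; eapply Hfp; eauto.
        -- exact (l2n_l2 _ _ (delta_l2n a)).
      * apply (l2n_l2 _ (Cmod (G a) * 1)). apply (l2n_dom (delta X a)); [apply delta_l2n|apply Cmod_ge_0|].
        intros y; rewrite Cmod_mult; lra.
      * apply (l2n_l2 _ c). apply (l2n_dom1 G); auto. intros y; unfold truncf.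
        destruct (excluded_middle_informative (In y l)); [lra|]. rewrite Cmod_0; apply Cmod_ge_0.
    + apply functional_extensionality; intros y. unfold truncf, delta.
      destruct (excluded_middle_informative (In y (a :: l))) as [Hi|Hi];
      destruct (excluded_middle_informative (y = a)) as [Ey|Ey];
      destruct (excluded_middle_informative (In y l)) as [Hi'|Hi']; subst; simpl in *; try tauto; try ring.
      destruct Hi; [congruence|tauto].
Qed.

Lemma locality {X} (d : X -> X -> R) (b : op X) Rp x G :
  bdd_op X b -> (forall x y, b (delta X y) x <> RtoC 0 -> d x y <= Rp) ->
  l2 X G -> (forall y, d x y <= Rp -> G y = RtoC 0) -> b G x = RtoC 0.
Proof.
  intros Hb Hfp HG HGz. destruct HG as [c HG].
  destruct Hb as [Hadd [Hsc [cb Hcb]]].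
  assert (Hbb : bdd_op X b) by (split; [|split]; eauto).
  apply Cmod_eq_0.
  assert (Hcb0 : 0 <= cb) by (destruct Hcb; auto).
  assert (Hall : forall eps, 0 < eps -> Cmod (b G x) <= cb * eps).
  { intros eps He. destruct (tail_small G c eps HG He) as [l [Hl Ht]].
    replace G with (fun y => Cplus (truncf l G y) (tailf l G y)).
    - rewrite bdd_add; auto.
      + rewrite (trunc_zero d b Rp x G l); auto.
        * rewrite Cplus_0_l. apply (op_pt b cb _ eps); auto.
        * exists c; auto.
      + apply (l2n_l2 _ c). apply (l2n_dom1 G); auto. intros y; unfold truncf.
        destruct (excluded_middle_informative (In y l)); [lra|]. rewrite Cmod_0; apply Cmod_ge_0.
      + exact (l2n_l2 _ _ Ht).
    - apply functional_extensionality; intros y. unfold truncf, tailf.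
      destruct (excluded_middle_informative (In y l)); ring. }
  pose proof (Cmod_ge_0 (b G x)).
  destruct (Req_dec (Cmod (b G x)) 0) as [E|N]; auto. exfalso.
  set (v := Cmod (b G x)).
  specialize (Hall (v / (2 * (cb + 1)))).
  assert (0 < v / (2 * (cb + 1))) by (apply Rdiv_lt_0_compat; fold v in N, H; lra).
  specialize (Hall H0). fold v in Hall.
  assert (cb * (v / (2 * (cb + 1))) < v).
  { apply (Rmult_lt_reg_r (2 * (cb + 1))); [lra|].
    replace (cb * (v / (2 * (cb + 1))) * (2 * (cb + 1))) with (cb * v) by (field; lra).
    fold v in N, H. nra. }
  lra.
Qed.

Lemma expdiag_l2n {X} (h : X -> R) t f c :
  l2norm_le X f c -> l2norm_le X (expdiag X h t f) c.
Proof. intros H; apply (l2n_em f c (fun x => t * h x)); auto. Qed.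

Lemma expdiag_l2 {X} (h : X -> R) t f : l2 X f -> l2 X (expdiag X h t f).
Proof. intros [c H]; exists c; apply expdiag_l2n; auto. Qed.

Lemma sigma_eq {X} (h : X -> R) t (a : op X) f x :
  sigma_act X h t a f x = Cmult (expi (t * h x)) (a (expdiag X h (- t) f) x).
Proof. reflexivity. Qed.

Lemma bdd_sigma {X} (h : X -> R) t (a : op X) : bdd_op X a -> bdd_op X (sigma_act X h t a).
Proof.
  intros Ha. pose proof Ha as [Hadd [Hsc [c Hc]]].
  split; [|split].
  - intros f g Hf Hg x. rewrite !sigma_eq.
    replace (expdiag X h (- t) (fun y => Cplus (f y) (g y)))
      with (fun y => Cplus (expdiag X h (- t) f y) (expdiag X h (- t) g y)).
    + rewrite Hadd by (apply expdiag_l2; auto). ring.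
    + apply functional_extensionality; intros y; unfold expdiag; ring.
  - intros k f Hf x. rewrite !sigma_eq.
    replace (expdiag X h (- t) (fun y => Cmult k (f y)))
      with (fun y => Cmult k (expdiag X h (- t) f y)).
    + rewrite Hsc by (apply expdiag_l2; auto). ring.
    + apply functional_extensionality; intros y; unfold expdiag; ring.
  - exists c. destruct Hc as [Hc0 Hc]. split; auto. intros f m Hf Hm.
    unfold sigma_act. apply expdiag_l2n. apply Hc.
    + apply expdiag_l2; auto.
    + apply expdiag_l2n; auto.
Qed.

Lemma sigma_sub {X} (h : X -> R) t (a b : op X) e :
  opnorm_le X (opsub X a b) e ->
  opnorm_le X (opsub X (sigma_act X h t a) (sigma_act X h t b)) e.
Proof.
  intros [He H]. split; auto. intros f m Hf Hm.
  apply (l2n_dom1 (opsub X a b (expdiag X h (- t) f))).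
  - apply H. apply expdiag_l2; auto. apply expdiag_l2n; auto.
  - intros x. unfold opsub. rewrite !sigma_eq.
    replace (Cminus (Cmult (expi (t * h x)) (a (expdiag X h (- t) f) x))
       (Cmult (expi (t * h x)) (b (expdiag X h (- t) f) x)))
    with (Cmult (expi (t * h x)) (Cminus (a (expdiag X h (- t) f) x) (b (expdiag X h (- t) f) x)))
    by ring.
    rewrite Cmod_em. lra.
Qed.

Lemma opsub_sym {X} (a b : op X) e :
  opnorm_le X (opsub X a b) e -> opnorm_le X (opsub X b a) e.
Proof.
  intros [He H]. split; auto. intros f m Hf Hm.
  apply (l2n_dom1 (opsub X a b f)); auto.
  intros x. unfold opsub.
  replace (Cminus (b f x) (a f x)) with (Copp (Cminus (a f x) (b f x))) by ring.
  rewrite Cmod_opp. lra.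
Qed.

Lemma fp_sigma {X} (d : X -> X -> R) (h : X -> R) t (b : op X) :
  bdd_op X b -> finite_prop X d b -> finite_prop X d (sigma_act X h t b).
Proof.
  intros Hb [Rp HR]. exists Rp. intros x y Hne. apply HR. intros E. apply Hne.
  rewrite sigma_eq.
  replace (expdiag X h (- t) (delta X y)) with (fun z => Cmult (expi (- t * h y)) (delta X y z)).
  - rewrite bdd_scal; auto.
    + rewrite E. ring.
    + exact (l2n_l2 _ _ (delta_l2n y)).
  - apply functional_extensionality; intros z. unfold expdiag, delta.
    destruct (excluded_middle_informative (z = y)) as [->|N]; [reflexivity|ring].
Qed.

Lemma part1 {X} (d : X -> X -> R) (h : X -> R) (a : op X) :
  in_Cu X d a -> forall t, in_Cu X d (sigma_act X h t a).
Proof.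
  intros [Ha Happ] t. split; [apply bdd_sigma; auto|].
  intros eps He. destruct (Happ eps He) as [b [Hb [Hfp Hn]]].
  exists (sigma_act X h t b). split; [apply bdd_sigma; auto|]. split.
  - apply fp_sigma; auto.
  - apply sigma_sub; auto.
Qed.

Lemma three_eps {X} (A B C0 D : op X) e1 e2 e3 :
  opnorm_le X (opsub X A B) e1 -> opnorm_le X (opsub X B C0) e2 ->
  opnorm_le X (opsub X C0 D) e3 -> opnorm_le X (opsub X A D) (e1 + e2 + e3).
Proof.
  intros [H1 G1] [H2 G2] [H3 G3]. split; [lra|]. intros f m Hf Hm.
  replace ((e1 + e2 + e3) * m) with (e1 * m + (e2 * m + e3 * m)) by ring.
  apply (l2n_add (opsub X A B f) (fun x => Cplus (opsub X B C0 f x) (opsub X C0 D f x))).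
  - apply G1; auto.
  - apply (l2n_add (opsub X B C0 f) (opsub X C0 D f)); auto.
    intros x; apply Cmod_triangle.
  - intros x. unfold opsub.
    replace (Cminus (A f x) (D f x)) with
      (Cplus (Cminus (A f x) (B f x)) (Cplus (Cminus (B f x) (C0 f x)) (Cminus (C0 f x) (D f x)))) by ring.
    apply Cmod_triangle.
Qed.

Lemma modeq (a b M m : Z) : (M = 2 * m + 1)%Z -> (a mod M = b mod M)%Z ->
  (- m < a < m)%Z -> (- m < b < m)%Z -> a = b.
Proof.
  intros HM Hab Ha Hb.
  assert (HM0 : (M <> 0)%Z) by lia.
  pose proof (Z.div_mod a M HM0). pose proof (Z.div_mod b M HM0).
  set (qa := (a / M)%Z) in *. set (qb := (b / M)%Z) in *.
  assert (E : (a - b = M * (qa - qb))%Z) by lia.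
  clearbody qa qb. set (q := (qa - qb)%Z) in *. clearbody q.
  destruct (Z.eq_dec q 0) as [->|Nq]; [lia|].
  exfalso. destruct (Z_lt_le_dec 0 q).
  - assert (M <= M * q)%Z by nia. lia.
  - assert (M * q <= - M)%Z by nia. lia.
Qed.

Definition jf {X} (h : X -> R) x := Int_part (h x).
Definition phif {X} (h : X -> R) x := h x - IZR (jf h x).
Definition resf {X} (h : X -> R) (M : Z) x := Z.modulo (jf h x) M.
Definition Pr {X} (h : X -> R) (M r : Z) (f : X -> C) y :=
  if Z.eq_dec (resf h M y) r then f y else RtoC 0.

Lemma phif_bnd {X} (h : X -> R) x : 0 <= phif h x < 1.
Proof. unfold phif, jf. pose proof (base_Int_part (h x)). lra. Qed.

Lemma key_k {X} (d : X -> X -> R) (h : X -> R) Rp (m : nat) M x r :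
  (forall x y, d x y <= Rp -> (- Z.of_nat m < jf h y - jf h x < Z.of_nat m)%Z) ->
  M = (2 * Z.of_nat m + 1)%Z ->
  exists k : Z, Rabs (IZR k) <= INR m /\
    forall y, d x y <= Rp -> resf h M y = r -> jf h y = (jf h x + k)%Z.
Proof.
  intros Hj HM.
  destruct (classic (exists y0, d x y0 <= Rp /\ resf h M y0 = r)) as [[y0 [Hy0 Hr0]]|Hn].
  - exists (jf h y0 - jf h x)%Z. split.
    + pose proof (Hj x y0 Hy0). rewrite INR_IZR_INZ. apply Rabs_le.
      split; [rewrite <- opp_IZR|]; apply IZR_le; lia.
    + intros y Hy Hr. pose proof (Hj x y Hy). pose proof (Hj x y0 Hy0).
      assert (jf h y - jf h x = jf h y0 - jf h x)%Z; [|lia].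
      apply (modeq _ _ M (Z.of_nat m)); auto.
      rewrite Zminus_mod, (Zminus_mod (jf h y0)). unfold resf in *. rewrite Hr, Hr0. reflexivity.
  - exists 0%Z. split.
    + rewrite Rabs_R0. apply pos_INR.
    + intros y Hy Hr. exfalso; apply Hn; eauto.
Qed.

Lemma loc_eq {X} (d : X -> X -> R) (b : op X) Rp x G1 G2 :
  bdd_op X b -> (forall x y, b (delta X y) x <> RtoC 0 -> d x y <= Rp) ->
  l2 X G1 -> l2 X G2 -> (forall y, d x y <= Rp -> G1 y = G2 y) -> b G1 x = b G2 x.
Proof.
  intros Hb HR [c1 H1] [c2 H2] Heq.
  assert (Hd : l2 X (fun y => Cminus (G1 y) (G2 y))).
  { exists (c1 + c2). apply (l2n_add G1 G2); auto. intros y.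
    unfold Cminus. rewrite <- (Cmod_opp (G2 y)). apply Cmod_triangle. }
  replace G1 with (fun y => Cplus (G2 y) (Cminus (G1 y) (G2 y))) at 1.
  - rewrite bdd_add; auto.
    + rewrite (locality d b Rp x (fun y => Cminus (G1 y) (G2 y))); auto.
      * ring.
      * intros y Hy. rewrite Heq by auto. ring.
    + exists c2; auto.
  - apply functional_extensionality; intros y. ring.
Qed.

Lemma Pr_l2n {X} (h : X -> R) M r f c : l2norm_le X f c -> l2norm_le X (Pr h M r f) c.
Proof.
  intros H; apply (l2n_dom1 f); auto. intros y; unfold Pr.
  destruct (Z.eq_dec (resf h M y) r); [lra|]. rewrite Cmod_0; apply Cmod_ge_0.
Qed.

Lemma pc {X} (d : X -> X -> R) (h : X -> R) (b : op X) Rp (m : nat) M f x r t t0 :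
  bdd_op X b -> (forall x y, b (delta X y) x <> RtoC 0 -> d x y <= Rp) ->
  (forall x y, d x y <= Rp -> (- Z.of_nat m < jf h y - jf h x < Z.of_nat m)%Z) ->
  M = (2 * Z.of_nat m + 1)%Z -> l2 X f ->
  Cmod (opsub X (sigma_act X h t b) (sigma_act X h t0 b) (Pr h M r f) x) <=
    Rabs (t - t0) * (1 + INR m) *
      Cmod (b (fun y => Cmult (expi (- t * phif h y)) (Pr h M r f y)) x)
    + Cmod (b (fun y => Cmult (Cminus (expi (- t * phif h y)) (expi (- t0 * phif h y)))
                               (Pr h M r f y)) x).
Proof.
  intros Hb HR Hj HM [nf Hf].
  destruct (key_k d h Rp m M x r Hj HM) as [k [Hk Hky]].
  set (g := Pr h M r f).
  assert (Hg : l2norm_le X g nf) by (apply Pr_l2n; auto).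
  assert (Hgl : l2 X g) by (exists nf; auto).
  assert (Hloc : forall tau, b (expdiag X h (- tau) g) x =
     Cmult (expi (- tau * IZR (jf h x + k))) (b (fun y => Cmult (expi (- tau * phif h y)) (g y)) x)).
  { intros tau. rewrite <- bdd_scal; auto.
    - apply (loc_eq d b Rp); auto.
      + apply expdiag_l2; auto.
      + exists (1 * nf). apply (l2n_dom g); auto; [lra|]. intros y.
        rewrite !Cmod_mult, !Cmod_expi. lra.
      + intros y Hy. unfold expdiag, g, Pr.
        destruct (Z.eq_dec (resf h M y) r) as [Er|Nr].
        * rewrite <- (Hky y Hy Er). rewrite Cmult_assoc, <- expi_add. f_equal. f_equal.
          unfold phif. ring.
        * ring.
    - exists nf. apply (l2n_em g nf (fun y => - tau * phif h y)); auto. }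
  set (Ut := b (fun y => Cmult (expi (- t * phif h y)) (g y)) x).
  set (Ut0 := b (fun y => Cmult (expi (- t0 * phif h y)) (g y)) x).
  set (V := b (fun y => Cmult (Cminus (expi (- t * phif h y)) (expi (- t0 * phif h y))) (g y)) x).
  assert (HUV : Ut = Cplus V Ut0).
  { unfold Ut, V, Ut0. rewrite <- bdd_add; auto.
    - f_equal. apply functional_extensionality; intros y. ring.
    - exists (2 * nf). apply (l2n_dom g); auto; [lra|]. intros y.
      rewrite Cmod_mult. unfold Cminus.
      pose proof (Cmod_triangle (expi (- t * phif h y)) (Copp (expi (- t0 * phif h y)))).
      rewrite Cmod_opp, !Cmod_expi in H. pose proof (Cmod_ge_0 (g y)).
      pose proof (Cmod_ge_0 (Cplus (expi (- t * phif h y)) (Copp (expi (- t0 * phif h y))))). nra.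
    - exists nf. apply (l2n_em g nf (fun y => - t0 * phif h y)); auto. }
  unfold opsub. rewrite !sigma_eq. rewrite !Hloc. fold Ut Ut0 V.
  set (th := h x - IZR (jf h x + k)).
  assert (Ea : forall tau, Cmult (expi (tau * h x)) (expi (- tau * IZR (jf h x + k))) = expi (tau * th)).
  { intros tau. rewrite <- expi_add. f_equal. unfold th. ring. }
  replace (Cminus (Cmult (expi (t * h x)) (Cmult (expi (- t * IZR (jf h x + k))) Ut))
                  (Cmult (expi (t0 * h x)) (Cmult (expi (- t0 * IZR (jf h x + k))) Ut0)))
    with (Cplus (Cmult (Cminus (expi (t * th)) (expi (t0 * th))) Ut) (Cmult (expi (t0 * th)) V)).
  2: { rewrite <- !Ea. rewrite HUV. ring. }
  eapply Rle_trans; [apply Cmod_triangle|].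
  rewrite !Cmod_mult, Cmod_expi.
  assert (Hth : Rabs th <= 1 + INR m).
  { unfold th. rewrite plus_IZR.
    pose proof (phif_bnd h x). unfold phif in H.
    replace (h x - (IZR (jf h x) + IZR k)) with ((h x - IZR (jf h x)) - IZR k) by ring.
    eapply Rle_trans; [apply Rabs_triang|]. rewrite Rabs_Ropp, Rabs_pos_eq by lra. lra. }
  pose proof (Cmod_expi_sub (t * th) (t0 * th)).
  replace (t * th - t0 * th) with ((t - t0) * th) in H by ring.
  rewrite Rabs_mult in H.
  assert (Rabs (t - t0) * Rabs th <= Rabs (t - t0) * (1 + INR m)) by (apply Rmult_le_compat_l; [apply Rabs_pos|lra]).
  pose proof (Cmod_ge_0 Ut). pose proof (Cmod_ge_0 V).
  pose proof (Cmod_ge_0 (Cminus (expi (t * th)) (expi (t0 * th)))).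
  nra.
Qed.

Definition csum {A X : Type} (F : A -> X -> C) (L : list A) (y : X) : C :=
  fold_right (fun i acc => Cplus (F i y) acc) (RtoC 0) L.
Definition csumv {A : Type} (G : A -> C) (L : list A) : C :=
  fold_right (fun i acc => Cplus (G i) acc) (RtoC 0) L.

Lemma zero_l2n {X} : l2norm_le X (fun _ => RtoC 0) 0.
Proof.
  rewrite l2_rl2. split; [lra|]. intros l _. rewrite rsq_zero; [simpl; lra|].
  intros; apply Cmod_0.
Qed.

Lemma l2_csum {A X} (F : A -> X -> C) L : (forall i, l2 X (F i)) -> l2 X (csum F L).
Proof.
  intros HF. induction L as [|i L IH].
  - exists 0. exact zero_l2n.
  - destruct IH as [c Hc]. destruct (HF i) as [ci Hi]. exists (ci + c).
    apply (l2n_add (F i) (csum F L)); auto. intros y. apply Cmod_triangle.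
Qed.

Lemma bdd_csum {A X} (b : op X) (F : A -> X -> C) L x :
  bdd_op X b -> (forall i, l2 X (F i)) ->
  b (csum F L) x = csumv (fun i => b (F i) x) L.
Proof.
  intros Hb HF. induction L as [|i L IH].
  - simpl. replace (csum F nil) with (fun y => Cmult (RtoC 0) (delta X x y)).
    + rewrite bdd_scal; auto. ring. exact (l2n_l2 _ _ (delta_l2n x)).
    + apply functional_extensionality; intros y. unfold csum; simpl. ring.
  - change (b (fun y => Cplus (F i y) (csum F L y)) x = Cplus (b (F i) x) (csumv (fun i => b (F i) x) L)).
    rewrite bdd_add; auto. rewrite IH; auto. apply l2_csum; auto.
Qed.

Lemma csum_P (a : Z) (v : C) L : NoDup L -> In a L ->
  csumv (fun r => if Z.eq_dec a r then v else RtoC 0) L = v.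
Proof.
  intros Hn; induction Hn as [|r L Hr Hn IH]; simpl; [tauto|]. intros [->|Hi].
  - destruct (Z.eq_dec a a); [|tauto].
    replace (csumv (fun r => if Z.eq_dec a r then v else RtoC 0) L) with (RtoC 0).
    + ring.
    + clear IH. induction L as [|r' L IH']; simpl; [reflexivity|].
      destruct (Z.eq_dec a r'); [subst; simpl in Hr; tauto|].
      rewrite <- IH'. ring. simpl in Hr; tauto. inversion Hn; auto.
  - destruct (Z.eq_dec a r); [subst; tauto|]. rewrite IH by auto. ring.
Qed.

Lemma csumv_mult {A} (c : C) (G : A -> C) L :
  Cmult c (csumv G L) = csumv (fun i => Cmult c (G i)) L.
Proof. induction L; simpl; [ring|]. rewrite <- IHL. ring. Qed.

Lemma csumv_sub {A} (G1 G2 : A -> C) L :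
  Cminus (csumv G1 L) (csumv G2 L) = csumv (fun i => Cminus (G1 i) (G2 i)) L.
Proof. induction L; simpl; [ring|]. rewrite <- IHL. ring. Qed.

Lemma cmod_csumv {A} (G : A -> C) (w : A -> R) L :
  (forall i, Cmod (G i) <= w i) -> Cmod (csumv G L) <= fold_right (fun i acc => w i + acc) 0 L.
Proof.
  intros H. induction L; simpl.
  - rewrite Cmod_0; lra.
  - eapply Rle_trans; [apply Cmod_triangle|]. specialize (H a). lra.
Qed.

Lemma core {X} (d : X -> X -> R) (h : X -> R) (b : op X) :
  coarse X d h -> bdd_op X b -> finite_prop X d b ->
  forall t0 eps, 0 < eps -> exists del, 0 < del /\ forall t, Rabs (t - t0) < del ->
    opnorm_le X (opsub X (sigma_act X h t b) (sigma_act X h t0 b)) eps.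
Proof.
  intros Hh Hb [Rp HR] t0 eps He.
  pose proof Hb as [_ [_ [cb Hcb]]].
  assert (Hcb0 : 0 <= cb) by (destruct Hcb; auto).
  destruct (Hh (Rabs Rp + 1) ltac:(pose proof (Rabs_pos Rp); lra)) as [s [Hs Hsd]].
  set (m := Z.to_nat (up (s + 1))).
  assert (Hm : s + 1 < INR m).
  { destruct (archimed (s + 1)) as [H1 _].
    assert (0 < up (s + 1))%Z by (apply lt_IZR; lra).
    unfold m. rewrite INR_IZR_INZ, Z2Nat.id by lia. lra. }
  assert (Hj : forall x y, d x y <= Rp -> (- Z.of_nat m < jf h y - jf h x < Z.of_nat m)%Z).
  { intros x y Hd.
    assert (Hxy : Rabs (h x - h y) < s) by (apply Hsd; pose proof (Rle_abs Rp); lra).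
    pose proof (base_Int_part (h x)); pose proof (base_Int_part (h y)).
    unfold jf. rewrite INR_IZR_INZ in Hm. apply Rabs_def2 in Hxy.
    split; apply lt_IZR; rewrite ?opp_IZR, minus_IZR; lra. }
  set (M := (2 * Z.of_nat m + 1)%Z).
  set (L := map Z.of_nat (seq 0 (2 * m + 1))).
  assert (HLn : NoDup L).
  { unfold L. apply NoDup_map_NoDup_ForallPairs; [intros a a' _ _ E; lia|apply seq_NoDup]. }
  assert (HLi : forall y, In (resf h M y) L).
  { intros y. unfold L. apply in_map_iff. exists (Z.to_nat (resf h M y)).
    assert (0 <= resf h M y < M)%Z by (unfold resf; apply Z.mod_pos_bound; lia).
    split; [lia|]. apply in_seq. lia. }
  set (N := INR (length L)).
  assert (HN : 0 < N).
  { unfold N, L. rewrite length_map, length_seq. apply lt_0_INR. lia. }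
  pose proof (pos_INR m) as Hm0.
  set (del := eps / (N * (cb + 1) * (INR m + 2))).
  assert (Hdel : 0 < del) by (unfold del; apply Rdiv_lt_0_compat; [lra|]; repeat apply Rmult_lt_0_compat; lra).
  exists del. split; auto. intros t Ht.
  set (u := Rabs (t - t0)).
  assert (Hu0 : 0 <= u) by apply Rabs_pos.
  split; [lra|]. intros f nf Hfl Hf.
  assert (Hnf : 0 <= nf) by (destruct Hf; auto).
  set (U := fun r => b (fun y => Cmult (expi (- t * phif h y)) (Pr h M r f y))).
  set (V := fun r => b (fun y => Cmult (Cminus (expi (- t * phif h y)) (expi (- t0 * phif h y))) (Pr h M r f y))).
  set (w := fun r x => u * (1 + INR m) * Cmod (U r x) + Cmod (V r x)).
  set (B := u * (1 + INR m) * (cb * nf) + cb * (u * nf)).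
  assert (Hw : forall r, rl2 (w r) B).
  { intros r. apply (rl2_add (fun x => u * (1 + INR m) * Cmod (U r x)) (fun x => Cmod (V r x))).
    - apply (rl2_dom (fun x => Cmod (U r x)) (fun x => u * (1 + INR m) * Cmod (U r x)) (u * (1 + INR m)) (cb * nf)); [| apply Rmult_le_pos; lra | intros; apply Cmod_ge_0 |].
      + rewrite <- l2_rl2. apply (op_l2n b). auto.
        apply (l2n_em (Pr h M r f) nf (fun y => - t * phif h y)). apply Pr_l2n; auto.
      + intros x; split; [|lra]. apply Rmult_le_pos; [apply Rmult_le_pos; lra | apply Cmod_ge_0].
    - rewrite <- l2_rl2. apply (op_l2n b); auto.
      apply (l2n_dom (Pr h M r f)); auto; [apply Pr_l2n; auto|].
      intros y. rewrite Cmod_mult. pose proof (Cmod_ge_0 (Pr h M r f y)).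
      pose proof (Cmod_expi_sub (- t * phif h y) (- t0 * phif h y)).
      replace (- t * phif h y - - t0 * phif h y) with (- ((t - t0) * phif h y)) in H0 by ring.
      rewrite Rabs_Ropp, Rabs_mult in H0. pose proof (phif_bnd h y).
      rewrite (Rabs_pos_eq (phif h y)) in H0 by lra. fold u in H0.
      assert (u * phif h y <= u * 1) by (apply Rmult_le_compat_l; lra).
      apply Rmult_le_compat_r; [apply Cmod_ge_0|lra].
    - intros x. apply Rmult_le_pos; [apply Rmult_le_pos; lra | apply Cmod_ge_0].
    - intros; apply Cmod_ge_0.
    - intros x. unfold w. split; [|lra]. apply Rplus_le_le_0_compat; [apply Rmult_le_pos; [apply Rmult_le_pos; lra | apply Cmod_ge_0]|apply Cmod_ge_0]. }
  assert (Hw0 : forall r x, 0 <= w r x).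
  { intros r x. unfold w. apply Rplus_le_le_0_compat; [apply Rmult_le_pos; [apply Rmult_le_pos; lra | apply Cmod_ge_0]|apply Cmod_ge_0]. }
  assert (Hsum := rl2_lsum w L B Hw0
                  ltac:(destruct (Hw 0%Z); auto) ltac:(intros; apply Hw)).
  fold N in Hsum.
  assert (Hdec : forall tau x, b (expdiag X h (- tau) f) x =
            csumv (fun r => b (expdiag X h (- tau) (Pr h M r f)) x) L).
  { intros tau x. rewrite <- bdd_csum; auto.
    - f_equal. apply functional_extensionality; intros y. unfold csum, expdiag.
      change (Cmult (expi (- tau * h y)) (f y) =
              csumv (fun r => Cmult (expi (- tau * h y)) (Pr h M r f y)) L).
      rewrite <- csumv_mult. f_equal. unfold Pr. symmetry. apply csum_P; auto.
    - intros r. apply expdiag_l2. exists nf. apply Pr_l2n; auto. }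
  assert (Hpt : forall x, Cmod (opsub X (sigma_act X h t b) (sigma_act X h t0 b) f x) <= lsum w L x).
  { intros x. unfold opsub at 1. rewrite !sigma_eq, !Hdec, !csumv_mult, csumv_sub.
    unfold lsum. apply cmod_csumv. intros r.
    eapply Rle_trans; [|apply (pc d h b Rp m M f x r t t0); auto; exists nf; auto].
    right. reflexivity. }
  replace (eps * nf) with (1 * (N * B) + (eps * nf - N * B)) by ring.
  apply (l2n_mono _ (1 * (N * B))).
  - rewrite l2_rl2. apply (rl2_dom (lsum w L)); auto; [lra| |].
    + intros; apply lsum_ge0. auto.
    + intros x; split; [apply Cmod_ge_0|]. rewrite Rmult_1_l; auto.
  - assert (N * B <= eps * nf); [|lra].
    assert (EB : N * B = (N * u * cb * (INR m + 2)) * nf) by (unfold B; ring).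
    rewrite EB. apply Rmult_le_compat_r; auto.
    assert (u <= del) by (left; exact Ht).
    assert (E2 : eps = del * (N * (cb + 1) * (INR m + 2))) by (unfold del; field; split; lra).
    rewrite E2.
    assert (N * u * cb * (INR m + 2) <= N * del * (cb + 1) * (INR m + 2)).
    { apply Rmult_le_compat_r; [lra|]. apply Rmult_le_compat; try nra. }
    lra.
Qed.

Theorem proposition2p1 (X : Type) (d : X -> X -> R) (h : X -> R)
  (Hd : is_metric X d) (Hulf : ulf X d) (Hh : coarse X d h)
  (a : op X) (Ha : in_Cu X d a) :
  (forall t, in_Cu X d (sigma_act X h t a)) /\
  (forall t0 eps, 0 < eps -> exists del, 0 < del /\
     forall t, Rabs (t - t0) < del ->
       opnorm_le X (opsub X (sigma_act X h t a) (sigma_act X h t0 a)) eps).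
Proof.
  split; [apply part1; auto|].
  intros t0 eps He. destruct Ha as [Hab Happ].
  destruct (Happ (eps / 4) ltac:(lra)) as [b [Hb [Hfp Hn]]].
  destruct (core d h b Hh Hb Hfp t0 (eps / 2) ltac:(lra)) as [del [Hdel H]].
  exists del; split; auto; intros t Ht.
  replace eps with (eps / 4 + eps / 2 + eps / 4) by field.
  apply (three_eps _ (sigma_act X h t b) (sigma_act X h t0 b)).
  - apply sigma_sub; auto.
  - apply H; auto.
  - apply sigma_sub, opsub_sym; auto.
Qed.
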